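(* Fix $\lambda\in[0,1)$ and $p\in[0,1]$. There is a unique $\mathbf{v}^I\in\overline{\mathcal{V}}^\infty$ with $\mathbf{F}_i(\mathbf{v}^I)=0$ for all $i\ge 1$. Writing $\mathbf{s}^I_i=\mathbf{v}^I_i-\mathbf{v}^I_{i+1}$ for $i\ge0$, it is given as follows. (1) If $p=0$, then $\mathbf{s}^I_i=\lambda^i$ for all $i\ge1$. (2) If $p\ge\lambda$, then $\mathbf{s}^I_i=0$ for all $i\ge1$. (3) If $0<p<\lambda$ and $\lambda=1-p$, then $\mathbf{s}^I_i=1-\frac{p}{1-p}\,i$ for $1\le i\le \tilde i^*(p,\lambda)$ and $\mathbf{s}^I_i=0$ for $i>\tilde i^*(p,\lambda)$, where $\tilde i^*(p,\lambda)=\lfloor \frac{1-p}{p}\rfloor$. (4) If $0<p<\lambda$ and $\lambda\ne 1-p$, then $\mathbf{s}^I_i=\frac{1-\lambda}{1-(p+\lambda)}\left(\frac{\lambda}{1-p}\right)^i-\frac{p}{1-(p+\lambda)}$ for $1\le i\le i^*(p,\lambda)$ and $\mathbf{s}^I_i=0$ for $i>i^*(p,\lambda)$, where $i^*(p,\lambda)=\left\lfloor \log_{\frac{\lambda}{1-p}}\frac{p}{1-\lambda}\right\rfloor$.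
   Context: $\mathbb{Z}_+=\{0,1,2,\dots\}$. Let $\mathcal{S}=\{\mathbf{s}\in[0,1]^{\mathbb{Z}_+}:1=\mathbf{s}_0\ge\mathbf{s}_1\ge\cdots\ge0\}$, $\overline{\mathcal{S}}^\infty=\{\mathbf{s}\in\mathcal{S}:\sum_{i\ge1}\mathbf{s}_i<\infty\}$, and $\overline{\mathcal{V}}^\infty=\{\mathbf{v}\in\mathbb{R}^{\mathbb{Z}_+}:\mathbf{v}_i=\sum_{j\ge i}\mathbf{s}_j \text{ for all } i, \text{ for some } \mathbf{s}\in\overline{\mathcal{S}}^\infty\}$. For $\mathbf{v}\in\overline{\mathcal{V}}^\infty$ and $i\ge1$ define the drift $\mathbf{F}_i(\mathbf{v})=\lambda(\mathbf{v}_{i-1}-\mathbf{v}_i)-(1-p)(\mathbf{v}_i-\mathbf{v}_{i+1})-g_i(\mathbf{v})$, where $g_i(\mathbf{v})=p$ if $\mathbf{v}_i>0$; $g_i(\mathbf{v})=\min\{\lambda\mathbf{v}_{i-1},p\}$ if $\mathbf{v}_i=0,\mathbf{v}_{i-1}>0$; and $g_i(\mathbf{v})=0$ if $\mathbf{v}_i=\mathbf{v}_{i-1}=0$. *)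

(* Defs.v *)
From Stdlib Require Import Reals.
From Coquelicot Require Import Coquelicot.
Open Scope R_scope.

Definition in_S_fin (s : nat -> R) : Prop :=
  s 0%nat = 1 /\
  (forall i : nat, 0 <= s i <= 1) /\
  (forall i : nat, s (S i) <= s i) /\
  ex_series (fun k => s (S k)).

Definition in_V_fin (v : nat -> R) : Prop :=
  exists s : nat -> R, in_S_fin s /\
    forall i : nat, is_series (fun k => s (i + k)%nat) (v i).

Definition g_drift (lam p : R) (v : nat -> R) (i : nat) : R :=
  if Rlt_dec 0 (v i) then p
  else if Rlt_dec 0 (v (i - 1)%nat) then Rmin (lam * v (i - 1)%nat) p
  else 0.

Definition F_drift (lam p : R) (v : nat -> R) (i : nat) : R :=
  lam * (v (i - 1)%nat - v i) - (1 - p) * (v i - v (S i)) - g_drift lam p v i.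

Definition is_fixed_point (lam p : R) (v : nat -> R) : Prop :=
  in_V_fin v /\ forall i : nat, (1 <= i)%nat -> F_drift lam p v i = 0.

(* floor as an integer: Int_part x = up x - 1 = ⌊x⌋ *)
Definition log_base (b a : R) : R := ln a / ln b.

(* Main.v *)
Require Import Defs.
From Stdlib Require Import Reals ZArith Lra Lia FunctionalExtensionality.
From Coquelicot Require Import Coquelicot.
Open Scope R_scope.

Definition nxt (lam p x : R) : R :=
  if Rlt_dec p (lam * x) then (lam * x - p) / (1 - p) else 0.

Fixpoint sI (lam p : R) (n : nat) : R :=
  match n with O => 1 | S n => nxt lam p (sI lam p n) end.

Section Gen.
Variables (s v : nat -> R).
Hypothesis HS : in_S_fin s.
Hypothesis HV : forall i, is_series (fun k => s (i + k)%nat) (v i).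

Lemma v_step i : v i = s i + v (S i).
Proof.
  assert (H := HV i).
  assert (H2 : is_series (fun k => s (i + k)%nat) (plus (v i - s i) (s (i + 0)%nat))).
  { replace (plus (v i - s i) (s (i + 0)%nat)) with (v i); auto.
    replace (i + 0)%nat with i by lia. unfold plus; simpl. ring. }
  apply (is_series_incr_1 (fun k => s (i + k)%nat) (v i - s i)) in H2.
  assert (H3 : is_series (fun k => s (S i + k)%nat) (v i - s i)).
  { eapply is_series_ext; [|exact H2]. intro n; simpl. f_equal; lia. }
  apply is_series_unique in H3. apply is_series_unique in H.
  pose proof (is_series_unique _ _ (HV (S i))). lra.
Qed.

Lemma s_nonneg i : 0 <= s i.
Proof. destruct HS as (_ & H & _). apply H. Qed.

Lemma s_mono_le i j : (i <= j)%nat -> s j <= s i.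
Proof.
  destruct HS as (_ & _ & H & _). induction 1; [lra|]. specialize (H m). lra.
Qed.

Lemma v_nonneg i : 0 <= v i.
Proof.
  assert (H := HV i). assert (E := is_series_unique _ _ H).
  rewrite <- E.
  replace 0 with (Series (fun n => 0 * 1)).
  2:{ rewrite (Series_scal_l 0 (fun _ => 1)). ring. }
  apply Series_le. intro n. split; [lra|]. rewrite Rmult_0_l. apply s_nonneg.
  exists (v i). exact H.
Qed.

Lemma v_zero i : s i <= 0 -> v i = 0.
Proof.
  intro Hs. assert (H := HV i). apply is_series_unique in H. rewrite <- H.
  rewrite (Series_ext _ (fun n => 0 * 1)).
  - rewrite (Series_scal_l 0 (fun _ => 1)). ring.
  - intro n. assert (A := s_mono_le i (i+n) ltac:(lia)). assert (B := s_nonneg (i+n)). lra.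
Qed.

Lemma v_pos_iff i : 0 < v i <-> 0 < s i.
Proof.
  split; intro H.
  - destruct (Rlt_dec 0 (s i)) as [h|h]; auto. rewrite v_zero in H; lra.
  - rewrite v_step. assert (A := v_nonneg (S i)). lra.
Qed.

Lemma F_iff (lam p : R) (Hlam : 0 <= lam < 1) (Hp : 0 <= p <= 1) j :
  F_drift lam p v (S j) = 0 <-> s (S j) = nxt lam p (s j).
Proof.
  destruct HS as (H0 & Hb & Hm & _).
  assert (Ha := Hb j). assert (Hb' := Hb (S j)). assert (Hm' := Hm j).
  unfold F_drift, g_drift, nxt. replace (S j - 1)%nat with j by lia.
  rewrite (v_step j). rewrite (v_step (S j)).
  replace (s j + v (S j) - v (S j)) with (s j) by ring.
  replace (s (S j) + v (S (S j)) - v (S (S j))) with (s (S j)) by ring.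
  rewrite <- (v_step (S j)).
  destruct (Rlt_dec 0 (v (S j))) as [h1|h1].
  - apply v_pos_iff in h1.
    destruct (Rlt_dec p (lam * s j)) as [h2|h2].
    + assert (p < 1) by nra. split; intro E.
      * field_simplify_eq; lra.
      * rewrite E. field. lra.
    + split; intro E; [|lra]. exfalso.
      destruct (Req_dec p 1). subst. nra. nra.
  - assert (hs : s (S j) <= 0). { destruct (Rle_dec (s (S j)) 0); auto.
      exfalso; apply h1; apply v_pos_iff; lra. }
    assert (hs0 : s (S j) = 0) by lra. rewrite hs0.
    rewrite (v_zero (S j) hs). rewrite Rplus_0_r.
    destruct (Rlt_dec 0 (s j)) as [h2|h2].
    + destruct (Rlt_dec p (lam * s j)) as [h3|h3].
      * rewrite Rmin_right by lra. split; intro E; [lra|].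
        exfalso. assert (p < 1) by nra.
        assert (0 < (lam * s j - p) / (1-p)). { apply Rdiv_lt_0_compat; lra. } lra.
      * rewrite Rmin_left by lra. split; intros; lra.
    + destruct (Rlt_dec p (lam * s j)) as [h3|h3].
      * exfalso. assert (s j = 0) by lra. nra.
      * assert (s j = 0) by lra. split; intros; nra.
Qed.
End Gen.

Lemma pow_le_one x n : 0 <= x <= 1 -> x ^ n <= 1.
Proof. intro H. rewrite <- (pow1 n). apply pow_incr. lra. Qed.

Section S2.
Variables (lam p : R).
Hypothesis Hlam : 0 <= lam < 1.
Hypothesis Hp : 0 <= p <= 1.

Lemma nxt_bound x : 0 <= x <= 1 -> 0 <= nxt lam p x <= lam * x.
Proof.
  intro Hx. unfold nxt. destruct (Rlt_dec p (lam * x)).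
  - assert (p < 1) by nra. split.
    + apply Rdiv_le_0_compat; lra.
    + apply (Rmult_le_reg_r (1-p)); [lra|]. unfold Rdiv. rewrite Rmult_assoc, Rinv_l by lra.
      assert (lam * x <= 1) by nra. nra.
  - nra.
Qed.

Lemma sI_bound n : 0 <= sI lam p n <= lam ^ n.
Proof.
  induction n; simpl; [lra|].
  assert (lam ^ n <= 1) by (apply pow_le_one; lra).
  pose proof (nxt_bound (sI lam p n) ltac:(lra)). nra.
Qed.

Lemma sI_mono n : sI lam p (S n) <= sI lam p n.
Proof.
  simpl. pose proof (sI_bound n). assert (lam ^ n <= 1) by (apply pow_le_one; lra).
  pose proof (nxt_bound (sI lam p n) ltac:(lra)). nra.
Qed.

Lemma sI_ex i : ex_series (fun k => sI lam p (i + k)%nat).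
Proof.
  apply (@ex_series_le R_AbsRing R_CompleteNormedModule _ (fun k => lam ^ k)).
  - intro n. unfold norm; simpl. pose proof (sI_bound (i+n)).
    rewrite Rabs_pos_eq by lra. rewrite pow_add in H.
    assert (lam ^ i <= 1) by (apply pow_le_one; lra).
    assert (0 <= lam ^ n) by (apply pow_le; lra). nra.
  - apply ex_series_geom. rewrite Rabs_pos_eq; lra.
Qed.

Lemma sI_S : in_S_fin (sI lam p).
Proof.
  split; [reflexivity|]. split; [|split].
  - intro i. pose proof (sI_bound i). assert (lam ^ i <= 1) by (apply pow_le_one; lra). lra.
  - apply sI_mono.
  - exact (sI_ex 1).
Qed.

Definition vI (i : nat) : R := Series (fun k => sI lam p (i + k)%nat).

Lemma vI_series i : is_series (fun k => sI lam p (i + k)%nat) (vI i).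
Proof. apply Series_correct, sI_ex. Qed.

Lemma vI_fixed : is_fixed_point lam p vI.
Proof.
  split. { exists (sI lam p). split; [apply sI_S|apply vI_series]. }
  intros i Hi. destruct i as [|j]; [lia|].
  apply (F_iff (sI lam p) vI sI_S vI_series lam p Hlam Hp j). reflexivity.
Qed.

Lemma vI_unique w : is_fixed_point lam p w -> w = vI.
Proof.
  intros [[s [HS HV]] HF].
  assert (E : forall n, s n = sI lam p n).
  { induction n.
    - destruct HS as [H0 _]. exact H0.
    - rewrite (proj1 (F_iff s w HS HV lam p Hlam Hp n) (HF (S n) ltac:(lia))).
      rewrite IHn. reflexivity. }
  apply functional_extensionality. intro i.
  specialize (HV i). apply is_series_unique in HV. rewrite <- HV.
  unfold vI. apply Series_ext. intro n. apply E.
Qed.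

Lemma vI_diff i : vI i - vI (S i) = sI lam p i.
Proof. rewrite (v_step (sI lam p) vI vI_series i). ring. Qed.

End S2.

Section S3.
Variables (lam p : R).
Hypothesis Hlam : 0 <= lam < 1.
Hypothesis Hp : 0 <= p <= 1.

Lemma sI_p0 n : p = 0 -> sI lam p n = lam ^ n.
Proof.
  intro H0. induction n; simpl; auto. rewrite IHn. unfold nxt. subst p.
  destruct (Rlt_dec 0 (lam * lam ^ n)); [field|].
  assert (0 <= lam ^ n) by (apply pow_le; lra). nra.
Qed.

Lemma sI_big n : lam <= p -> sI lam p (S n) = 0.
Proof.
  intro H. simpl. unfold nxt. destruct (Rlt_dec p (lam * sI lam p n)); auto.
  exfalso. pose proof (sI_bound lam p Hlam Hp n).
  assert (lam ^ n <= 1) by (apply pow_le_one; lra). nra.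
Qed.

Hypothesis Hpl : 0 < p < lam.

Fixpoint phi n := match n with O => 1 | S n => (lam * phi n - p) / (1 - p) end.

Lemma phi_mono n : phi (S n) <= phi n.
Proof.
  induction n.
  - simpl. apply (Rmult_le_reg_r (1-p)); [lra|]. unfold Rdiv.
    rewrite Rmult_assoc, Rinv_l by lra. lra.
  - change (phi (S (S n))) with ((lam * phi (S n) - p) / (1 - p)).
    change (phi (S n)) with ((lam * phi n - p) / (1 - p)) at 2.
    apply (Rmult_le_reg_r (1-p)); [lra|]. unfold Rdiv.
    rewrite !Rmult_assoc, !Rinv_l by lra. nra.
Qed.

Lemma sI_phi n : sI lam p n = Rmax 0 (phi n).
Proof.
  induction n.
  - simpl. rewrite Rmax_right; lra.
  - simpl sI. rewrite IHn. unfold nxt. pose proof (phi_mono n).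
    destruct (Rle_dec 0 (phi n)).
    + rewrite (Rmax_right 0 (phi n)) by lra. change (phi (S n)) with ((lam * phi n - p) / (1 - p)).
      destruct (Rlt_dec p (lam * phi n)).
      * rewrite Rmax_right; auto. apply Rdiv_le_0_compat; lra.
      * rewrite Rmax_left; auto. unfold Rdiv. assert (0 < / (1-p)) by (apply Rinv_0_lt_compat; lra). nra.
    + rewrite !Rmax_left by lra. destruct (Rlt_dec p (lam * 0)); lra.
Qed.
End S3.

Lemma Int_le i x : (Z.of_nat i <= Int_part x)%Z -> INR i <= x.
Proof.
  intro H. destruct (base_Int_part x) as [A _]. rewrite INR_IZR_INZ.
  apply IZR_le in H. lra.
Qed.

Lemma Int_lt i x : (Int_part x < Z.of_nat i)%Z -> x < INR i.
Proof.
  intro H. destruct (base_Int_part x) as [_ A]. rewrite INR_IZR_INZ.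
  assert (H' : (Int_part x + 1 <= Z.of_nat i)%Z) by lia. apply IZR_le in H'.
  rewrite plus_IZR in H'. lra.
Qed.

Section S4.
Variables (lam p : R).
Hypothesis Hlam : 0 <= lam < 1.
Hypothesis Hp : 0 <= p <= 1.
Hypothesis Hpl : 0 < p < lam.

Lemma phi_case3 n : lam = 1 - p -> phi lam p n = 1 - p / (1 - p) * INR n.
Proof.
  intro E. induction n.
  - simpl. ring.
  - simpl phi. rewrite IHn, S_INR. rewrite E. field. lra.
Qed.

Lemma case3 i : lam = 1 - p ->
  ((Z.of_nat i <= Int_part ((1 - p) / p))%Z -> sI lam p i = 1 - p / (1 - p) * INR i) /\
  ((Int_part ((1 - p) / p) < Z.of_nat i)%Z -> sI lam p i = 0).
Proof.
  intro E. rewrite (sI_phi lam p Hlam Hp Hpl), phi_case3 by auto.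
  assert (Hq : 0 < p / (1 - p)) by (apply Rdiv_lt_0_compat; lra).
  assert (K : p / (1 - p) * ((1 - p) / p) = 1) by (field; lra).
  split; intro H.
  - apply Int_le in H. apply Rmax_right. nra.
  - apply Int_lt in H. apply Rmax_left. nra.
Qed.

Lemma phi_case4 n : lam <> 1 - p ->
  phi lam p n = ((1 - lam) * (lam / (1 - p)) ^ n - p) / (1 - (p + lam)).
Proof.
  intro E. assert (1 - (p + lam) <> 0) by lra. induction n.
  - simpl. field. auto.
  - simpl phi. rewrite IHn. simpl pow. field. split; [lra|auto].
Qed.

Lemma case4 i : lam <> 1 - p ->
  ((Z.of_nat i <= Int_part (log_base (lam / (1 - p)) (p / (1 - lam))))%Z ->
     sI lam p i = (1 - lam) / (1 - (p + lam)) * (lam / (1 - p)) ^ i - p / (1 - (p + lam))) /\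
  ((Int_part (log_base (lam / (1 - p)) (p / (1 - lam))) < Z.of_nat i)%Z -> sI lam p i = 0).
Proof.
  intro E. rewrite (sI_phi lam p Hlam Hp Hpl), phi_case4 by auto.
  set (r := lam / (1 - p)). set (q := p / (1 - lam)).
  assert (Hr : 0 < r) by (apply Rdiv_lt_0_compat; lra).
  assert (Hq : 0 < q) by (apply Rdiv_lt_0_compat; lra).
  assert (Hri : 0 < r ^ i) by (apply pow_lt; lra).
  assert (Eq : (1 - lam) * r ^ i - p = (1 - lam) * (r ^ i - q)) by (unfold q; field; lra).
  assert (Ef : (1 - lam) / (1 - (p + lam)) * r ^ i - p / (1 - (p + lam)) =
               ((1 - lam) * r ^ i - p) / (1 - (p + lam))) by (field; lra).
  rewrite Ef. rewrite Eq. unfold log_base. fold r q.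
  assert (Lp : ln (r ^ i) = INR i * ln r) by (apply ln_pow; auto).
  assert (Hc : 1 - (p + lam) > 0 \/ 1 - (p + lam) < 0) by lra.
  destruct Hc as [Hc|Hc].
  - assert (Hr1 : r < 1). { unfold r. apply (Rmult_lt_reg_r (1-p)); [lra|]. unfold Rdiv.
      rewrite Rmult_assoc, Rinv_l by lra. lra. }
    assert (Lr : ln r < 0). { rewrite <- ln_1. apply ln_increasing; lra. }
    assert (KL : ln q / ln r * ln r = ln q) by (field; lra).
    assert (Hic : 0 < / (1 - (p + lam))) by (apply Rinv_0_lt_compat; lra).
    split; intro H.
    + apply Int_le in H. apply Rmax_right. unfold Rdiv.
      assert (ln q <= INR i * ln r) by nra.
      assert (q <= r ^ i). { destruct (Rle_dec q (r ^ i)); auto.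
        assert (ln (r ^ i) < ln q) by (apply ln_increasing; lra). lra. }
      apply Rmult_le_pos; [nra|lra].
    + apply Int_lt in H. apply Rmax_left. unfold Rdiv.
      assert (INR i * ln r < ln q) by nra.
      assert (r ^ i < q). { destruct (Rlt_dec (r ^ i) q); auto.
        assert (ln q <= ln (r ^ i)) by (apply ln_le; lra). lra. }
      assert ((1 - lam) * (r ^ i - q) <= 0) by nra. nra.
  - assert (Hr1 : 1 < r). { unfold r. apply (Rmult_lt_reg_r (1-p)); [lra|]. unfold Rdiv.
      rewrite Rmult_assoc, Rinv_l by lra. lra. }
    assert (Lr : 0 < ln r). { rewrite <- ln_1. apply ln_increasing; lra. }
    assert (KL : ln q / ln r * ln r = ln q) by (field; lra).
    assert (Hic : / (1 - (p + lam)) < 0) by (apply Rinv_lt_0_compat; lra).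
    split; intro H.
    + apply Int_le in H. apply Rmax_right. unfold Rdiv.
      assert (INR i * ln r <= ln q) by nra.
      assert (r ^ i <= q). { destruct (Rle_dec (r ^ i) q); auto.
        assert (ln q < ln (r ^ i)) by (apply ln_increasing; lra). lra. }
      assert ((1 - lam) * (r ^ i - q) <= 0) by nra. nra.
    + apply Int_lt in H. apply Rmax_left. unfold Rdiv.
      assert (ln q < INR i * ln r) by nra.
      assert (q < r ^ i). { destruct (Rlt_dec q (r ^ i)); auto.
        assert (ln (r ^ i) <= ln q) by (apply ln_le; lra). lra. }
      assert (0 <= (1 - lam) * (r ^ i - q)) by nra. nra.
Qed.
End S4.

Theorem theorem1 (lam p : R) (Hlam : 0 <= lam < 1) (Hp : 0 <= p <= 1) :
  exists vI : nat -> R,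
    is_fixed_point lam p vI /\
    (forall w : nat -> R, is_fixed_point lam p w -> w = vI) /\
    (p = 0 ->
       forall i : nat, (1 <= i)%nat -> vI i - vI (S i) = lam ^ i) /\
    (lam <= p ->
       forall i : nat, (1 <= i)%nat -> vI i - vI (S i) = 0) /\
    (0 < p < lam -> lam = 1 - p ->
       forall i : nat, (1 <= i)%nat ->
         ((Z.of_nat i <= Int_part ((1 - p) / p))%Z ->
            vI i - vI (S i) = 1 - p / (1 - p) * INR i) /\
         ((Int_part ((1 - p) / p) < Z.of_nat i)%Z ->
            vI i - vI (S i) = 0)) /\
    (0 < p < lam -> lam <> 1 - p ->
       forall i : nat, (1 <= i)%nat ->
         ((Z.of_nat i <= Int_part (log_base (lam / (1 - p)) (p / (1 - lam))))%Z ->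
            vI i - vI (S i) =
              (1 - lam) / (1 - (p + lam)) * (lam / (1 - p)) ^ i
              - p / (1 - (p + lam))) /\
         ((Int_part (log_base (lam / (1 - p)) (p / (1 - lam))) < Z.of_nat i)%Z ->
            vI i - vI (S i) = 0)).
Proof.
  exists (vI lam p).
  split; [apply vI_fixed; auto|].
  split; [intros w Hw; apply vI_unique; auto|].
  split; [intros H0 i _; rewrite vI_diff by auto; apply sI_p0; auto|].
  split; [intros H i Hi; rewrite vI_diff by auto; destruct i; [lia|]; apply sI_big; auto|].
  split.
  - intros Hpl E i _. rewrite !vI_diff by auto. apply case3; auto.
  - intros Hpl E i _. rewrite !vI_diff by auto. apply case4; auto.
Qed.
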